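(* Let $p$ be an odd prime. Then \[ \sum_{j=0}^{p}E_j\equiv\frac32\pmod p . \]
   Context: The Euler polynomials are defined by $\sum_{n\ge0}E_n(x)\frac{t^n}{n!}=\frac{2}{e^t+1}e^{xt}$, and $E_n:=E_n(0)$ (so $E_0=1$, $E_1=-1/2$, $E_{2m}=0$ for $m\ge1$). For rationals whose denominators are coprime to $p$, $a\equiv b\pmod p$ means $a-b$ is $p$ times a rational with denominator coprime to $p$. *)

(* Defs.v *)
From mathcomp Require Import all_boot all_order all_algebra.
Set Implicit Arguments. Unset Strict Implicit. Unset Printing Implicit Defensive.
Import Order.TTheory GRing.Theory Num.Theory.
Local Open Scope ring_scope.

(* Euler numbers E_n = E_n(0), where sum_n E_n(x) t^n/n! = 2 e^{xt}/(e^t+1).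
   Comparing coefficients of t^n in (e^t + 1) * sum_n E_n t^n/n! = 2 gives
     sum_{k=0}^{n} C(n,k) E_k + E_n = 2 [n = 0],
   i.e. E_0 = 1 and E_n = -1/2 * sum_{k<n} C(n,k) E_k for n >= 1.
   [euler_list n] is the list [:: E_0; ...; E_n]. *)
Fixpoint euler_list (n : nat) : seq rat :=
  match n with
  | 0 => [:: 1]
  | n'.+1 =>
      let s := euler_list n' in
      rcons s (- (1 / 2) * \sum_(k < n'.+1) 'C(n'.+1, k)%:R * nth 0 s k)
  end.

Definition euler (n : nat) : rat := nth 0 (euler_list n) n.

Definition rat_congr (p : nat) (a b : rat) : Prop :=
  exists c : rat, a - b = p%:R * c /\ coprime `|denq c|%N p.

(* Main.v *)
Require Import Defs.
From mathcomp Require Import all_boot all_order all_algebra.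
From mathcomp Require Import ring zify lra.
Import Order.TTheory GRing.Theory Num.Theory.
Local Open Scope ring_scope.

Lemma size_euler_list n : size (euler_list n) = n.+1.
Proof. by elim: n => //= n IH; rewrite size_rcons IH. Qed.

Lemma nth_euler_list n k : (k <= n)%N -> nth 0 (euler_list n) k = euler k.
Proof.
elim: n => [|n IH]; first by rewrite leqn0 => /eqP ->.
rewrite leq_eqVlt => /orP [/eqP -> //|Hk].
by rewrite /= nth_rcons size_euler_list Hk IH.
Qed.

Lemma eulerS n : euler n.+1 =
  - (1 / 2) * \sum_(k < n.+1) 'C(n.+1, k)%:R * euler k.
Proof.
rewrite /euler /= nth_rcons size_euler_list ltnn eqxx.
congr (_ * _); apply: eq_bigr => k _; rewrite nth_euler_list //.
by rewrite -ltnS.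
Qed.

Lemma euler0 : euler 0 = 1.
Proof. by []. Qed.

Lemma euler_rec n : (0 < n)%N ->
  \sum_(k < n) 'C(n, k)%:R * euler k + 2 * euler n = 0.
Proof.
case: n => // n _; rewrite eulerS. set s := \sum_(_ < _) _. by field.
Qed.

Lemma euler_g n :
  \sum_(k < n.+1) 'C(n, k)%:R * euler k = (n == 0)%:R * 2 - euler n.
Proof.
case: n => [|n]; first rewrite big_ord1 /=. rewrite bin0 mul1r euler0. ring.
rewrite big_ord_recr /= binn.
have H := @euler_rec n.+1 isT.
rewrite -[X in X + _](addrK (2 * euler n.+1)) H. ring.
Qed.
Lemma binM n k j : (j <= k)%N -> (k <= n)%N ->
  ('C(n, k) * 'C(k, j) = 'C(n, j) * 'C(n - j, k - j))%N.
Proof.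
move=> hjk hkn.
have f1 := bin_fact hkn. have f2 := bin_fact hjk.
have hjn : (j <= n)%N by apply: leq_trans hkn.
have f3 := bin_fact hjn.
have hkj : (k - j <= n - j)%N by rewrite leq_sub2r.
have f4 := bin_fact hkj.
have e : (n - j - (k - j) = n - k)%N by rewrite subnBA // subnK.
rewrite e in f4.
apply/eqP; rewrite -(eqn_pmul2r (fact_gt0 j)) -(eqn_pmul2r (fact_gt0 (k - j))) -(eqn_pmul2r (fact_gt0 (n - k))).
apply/eqP.
transitivity (n`!).
  rewrite -f1 -f2. ring.
rewrite -f3 -f4. ring.
Qed.

Lemma innerK n j : (j <= n)%N ->
  \sum_(k < n.+1) 'C(n, k)%:R * 'C(k, j)%:R * (-1) ^+ (n - k) = (j == n)%:R :> rat.
Proof.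
move=> hjn.
rewrite -(big_mkord xpredT (fun k => 'C(n, k)%:R * 'C(k, j)%:R * (-1) ^+ (n - k))).
rewrite (@big_cat_nat _ _ _ j 0 n.+1) ?ltnS //=.
rewrite big1_seq ?add0r; last first.
  move=> i; rewrite mem_iota add0n subn0 => /andP [_ hi]; by rewrite (bin_small hi) mulr0 mul0r.
rewrite -{1}[j]add0n big_addn.
have -> : (n.+1 - j = (n - j).+1)%N by rewrite subSn.
rewrite big_mkord.
transitivity ('C(n, j)%:R * \sum_(i < (n - j).+1) (-1) ^+ ((n - j) - i) * (1 : rat) ^+ i *+ 'C(n - j, i)).
  rewrite big_distrr /=; apply: eq_bigr => i _.
  have hi := ltn_ord i.
  rewrite -natrM binM ?leq_addl //; last by lia.
  rewrite addnK natrM expr1n mulr1 -mulr_natr. have -> : (n - (i + j) = n - j - i)%N by lia. ring.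
rewrite -exprDn addNr expr0n subn_eq0.
case: (eqVneq j n) => [->|hne]; first by rewrite leqnn binn mulr1.
by rewrite leqNgt ltn_neqAle hne hjn mulr0.
by apply: leqW.
Qed.

Lemma binv (a : nat -> rat) n :
  \sum_(k < n.+1) 'C(n, k)%:R * (-1) ^+ (n - k) * (\sum_(j < k.+1) 'C(k, j)%:R * a j) = a n.
Proof.
transitivity (\sum_(k < n.+1) \sum_(j < n.+1) 'C(n, k)%:R * 'C(k, j)%:R * (-1) ^+ (n - k) * a j).
  apply: eq_bigr => k _.
  rewrite (big_ord_widen n.+1 (fun j => 'C(k, j)%:R * a j)) ?ltn_ord //.
  rewrite big_mkcond big_distrr /=; apply: eq_bigr => j _.
  case: ifP => hj; first by ring.
  have hkj : (k < j)%N by rewrite ltnNge -ltnS hj.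
  by rewrite (bin_small hkj) /= !(mulr0, mul0r).
rewrite exchange_big /=.
transitivity (\sum_(j < n.+1) (j == n :> nat)%:R * a j).
  apply: eq_bigr => j _. Time rewrite -(@innerK n j (ltn_ord j)) big_distrl /=.
  by apply: eq_bigr.
Time rewrite big_ord_recr /= eqxx mul1r big1 ?add0r // => j _.
by rewrite ltn_eqF ?mul0r.
Qed.

Lemma eulerB n :
  \sum_(k < n.+1) 'C(n, k)%:R * (-1) ^+ (n - k) * euler k + euler n = 2 * (-1) ^+ n.
Proof.
have := binv euler n.
under eq_bigr => k _ do rewrite euler_g.
rewrite big_ord_recl /= bin0 subn0 mul1r.
move=> H.
rewrite big_ord_recl /= bin0 subn0 euler0 mul1r.
set T := \sum_(i < n) _.
have HT : \sum_(i < n) 'C(n, bump 0 i)%:R * (-1) ^+ (n - bump 0 i) * (0 * 2 - euler (bump 0 i)) = - T.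
  rewrite /T -sumrN; apply: eq_bigr => i _; ring.
rewrite HT euler0 in H. rewrite -H. ring.
Qed.

Lemma signB n k : (k <= n)%N -> (-1) ^+ (n - k) = (-1) ^+ n * (-1) ^+ k :> rat.
Proof.
move=> hk; rewrite -{2}(subnK hk) exprD -mulrA -exprD addnn -mul2n exprM.
by rewrite sqrrN expr1n mulr1.
Qed.

Lemma euler_par n : (0 < n)%N -> (-1) ^+ n * euler n = - euler n.
Proof.
elim/ltn_ind: n => n IH hn.
have R := @euler_rec n hn.
have B := eulerB n.
rewrite big_ord_recr /= binn subnn expr0 !mul1r in B.
have HS : \sum_(k < n) 'C(n, k)%:R * (-1) ^+ (n - k) * euler k
   = (-1) ^+ n * \sum_(k < n) 'C(n, k)%:R * ((k == 0%N :> nat)%:R * 2 - euler k).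
  rewrite big_distrr /=; apply: eq_bigr => k _.
  have hk := ltn_ord k.
  rewrite signB; last by apply: ltnW.
  case: (posnP k) => [->|kp]; first by rewrite euler0 /=; ring.
  have := IH k hk kp; move=> e /=.
  transitivity ('C(n, k)%:R * (-1) ^+ n * ((-1) ^+ k * euler k)); first by ring.
  rewrite e; ring.
have HS2 : \sum_(k < n) 'C(n, k)%:R * ((k == 0%N :> nat)%:R * 2 - euler k)
   = 2 - \sum_(k < n) 'C(n, k)%:R * euler k.
  case: n hn {IH R B HS} => // n _.
  rewrite !big_ord_recl /= bin0 euler0.
  set T := \sum_(i < n) 'C(n.+1, bump 0 i)%:R * euler (bump 0 i).
  have -> : \sum_(i < n) 'C(n.+1, bump 0 i)%:R * ((bump 0 i == 0)%:R * 2 - euler (bump 0 i)) = - T.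
    rewrite /T -sumrN; apply: eq_bigr => i _; rewrite /bump /= add1n /=; ring.
  ring.
rewrite HS HS2 in B.
have e2 : \sum_(k < n) 'C(n, k)%:R * euler k = - (2 * euler n).
  by apply: (addIr (2 * euler n)); rewrite R; ring.
rewrite e2 in B.
have : 2 * ((-1) ^+ n * euler n + euler n) = 0.
  transitivity ((-1) ^+ n * (2 - - (2 * euler n)) + euler n + euler n - 2 * (-1) ^+ n); first ring.
  by rewrite B subrr.
move/eqP; rewrite mulf_eq0 => /orP [//|/eqP h].
by rewrite -[LHS]subr0 -h; ring.
Qed.

Definition dy (x : rat) : Prop := exists N : nat, x * 2 ^+ N \is a Num.int.

Lemma dy_int x : x \is a Num.int -> dy x.
Proof. by move=> h; exists 0%N; rewrite expr0 mulr1. Qed.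

Lemma dyD x y : dy x -> dy y -> dy (x + y).
Proof.
move=> [N hx] [M hy]; exists (N + M)%N.
rewrite exprD mulrDl.
have -> : x * (2 ^+ N * 2 ^+ M) = (x * 2 ^+ N) * 2 ^+ M by ring.
have -> : y * (2 ^+ N * 2 ^+ M) = (y * 2 ^+ M) * 2 ^+ N by ring.
by rewrite rpredD // rpredM // rpredX // rpred_nat.
Qed.

Lemma dyM x y : dy x -> dy y -> dy (x * y).
Proof.
move=> [N hx] [M hy]; exists (N + M)%N.
have -> : x * y * 2 ^+ (N + M) = (x * 2 ^+ N) * (y * 2 ^+ M) by rewrite exprD; ring.
by rewrite rpredM.
Qed.

Lemma dyN x : dy x -> dy (- x).
Proof. by move=> [N hx]; exists N; rewrite mulNr rpredN. Qed.

Lemma dy_half : dy (1 / 2).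
Proof. exists 1%N; rewrite expr1 mul1r mulVf //; exact: rpred1. Qed.

Lemma dy_sum n (F : 'I_n -> rat) : (forall k, dy (F k)) ->
  dy (\sum_(k < n) F k).
Proof.
move=> h; apply: (big_ind dy); first by apply: dy_int; exact: rpred0.
  exact: dyD.
by move=> i _; apply: h.
Qed.

Lemma dy_euler n : dy (euler n).
Proof.
elim: n {-2}n (leqnn n) => [|n IHn] m hm.
  by move: hm; rewrite leqn0 => /eqP ->; apply: dy_int; rewrite euler0; exact: rpred1.
case: m hm => [|m] hm; first by apply: dy_int; rewrite euler0; exact: rpred1.
rewrite eulerS; apply: dyM; first by apply: dyN; exact: dy_half.
apply: dy_sum => k; have hk := ltn_ord k; apply: dyM; first by apply: dy_int; exact: rpred_nat.
by apply: IHn; rewrite -ltnS (leq_trans hk).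
Qed.

Lemma dy_coprime c p : odd p -> dy c -> coprime `|denq c| p.
Proof.
move=> hp [N /intrP [z hz]].
have e : (numq c * 2 ^+ N = z * denq c)%R.
  apply: (@intr_inj rat).
  by rewrite !rmorphM /= numqE -hz rmorphXn /=; ring.
have e2 : (`|numq c| * 2 ^ N = `|z| * `|denq c|)%N.
  have e3 : `|(numq c * 2 ^+ N)%R|%N = `|(z * denq c)%R|%N by rewrite e.
  by rewrite !abszM abszX in e3.
have hd : (`|denq c| %| 2 ^ N)%N.
  rewrite -(@Gauss_dvdr _ `|numq c|); last by rewrite coprime_sym coprime_num_den.
  by rewrite e2 dvdn_mull.
apply: coprime_dvdl hd _.
by apply: coprimeXl; rewrite coprime2n.
Qed.

Lemma altC n k : \sum_(i < k.+1) (-1) ^+ i * 'C(n.+1, i)%:R = (-1) ^+ k * 'C(n, k)%:R :> rat.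
Proof.
elim: k => [|k IH]; first by rewrite big_ord1 /= !bin0 expr0.
rewrite big_ord_recr /= IH binS natrD exprS; ring.
Qed.

Lemma binp_int p k : prime p -> (0 < k < p)%N -> 'C(p, k)%:R / p%:R \is a @Num.int rat.
Proof.
move=> hp hk; rewrite -natf_div; first exact: rpred_nat.
exact: prime_dvd_bin.
Qed.

Lemma xk_int q k : prime q.+1 -> ~~ odd q -> (k < q.+1)%N ->
  (1 - 'C(q, k)%:R * (-1) ^+ (q - k)) / q.+1%:R \is a @Num.int rat.
Proof.
move=> hp hq hk.
have hs : (-1) ^+ (q - k) = (-1) ^+ k :> rat.
  rewrite signB // -signr_odd (negbTE hq) expr0 mul1r //.
rewrite hs (mulrC 'C(q, k)%:R) -altC big_ord_recl /= expr0 bin0 mul1r.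
set T := \sum_(i < k) _.
have -> : (1 - (1 + T)) / q.+1%:R
   = - \sum_(i < k) (-1) ^+ i.+1 * ('C(q.+1, i.+1)%:R / q.+1%:R).
  have -> : 1 - (1 + T) = - T by ring.
  rewrite mulNr /T mulr_suml; congr (- _); apply: eq_bigr => i _.
  rewrite /bump /= add1n; ring.
rewrite rpredN; apply: rpred_sum => i _.
apply: rpredM; first by apply: rpredX; rewrite rpredN; exact: rpred1.
apply: binp_int => //; have := ltn_ord i; lia.
Qed.

Lemma yk_int p k : prime p -> (k < p)%N ->
  ('C(p, k)%:R - (k == 0%N :> nat)%:R) / p%:R \is a @Num.int rat.
Proof.
move=> hp hk; case: (posnP k) => [->|kp].
  by rewrite bin0 subrr mul0r; exact: rpred0.
move: kp; case: k hk => // k hk _ /=. rewrite subr0; apply: binp_int => //; lia.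
Qed.

Theorem corollary4 (p : nat) (hp : prime p) (hodd : odd p) :
  rat_congr p (\sum_(0 <= j < p.+1) euler j) (3%:R / 2%:R).
Proof.
have [q hpq] : exists q, p = q.+1 by case: p hp {hodd} => // q; exists q.
subst p.
have hq : ~~ odd q by move: hodd => /=.
have q2 : (0 < q)%N by have := prime_gt1 hp; lia.
have Eq : euler q = 0.
  have := @euler_par q q2; rewrite -signr_odd (negbTE hq) expr0 mul1r => h; lra.
have hB := eulerB q.
rewrite Eq addr0 -signr_odd (negbTE hq) expr0 mulr1 in hB.
have hC := @euler_rec q.+1 isT.
have hC' : \sum_(k < q.+1) 'C(q.+1, k)%:R * euler k = - (2 * euler q.+1).
  by apply: (addIr (2 * euler q.+1)); rewrite hC; ring.
have h0 : \sum_(k < q.+1) (k == 0%N :> nat)%:R * euler k = 1.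
  rewrite big_ord_recl /= euler0 mul1r big1 ?addr0 // => i _.
  by rewrite /bump /= add1n /= mul0r.
have hp0 : q.+1%:R != 0 :> rat by rewrite pnatr_eq0.
set U := \sum_(k < q.+1) ((1 - 'C(q, k)%:R * (-1) ^+ (q - k)) / q.+1%:R) * euler k.
set V := \sum_(k < q.+1) (('C(q.+1, k)%:R - (k == 0%N :> nat)%:R) / q.+1%:R) * euler k.
exists (U - 1 / 2 * V); split.
  have e1 : q.+1%:R * U = \sum_(k < q.+1) euler k
      - \sum_(k < q.+1) 'C(q, k)%:R * (-1) ^+ (q - k) * euler k.
    rewrite /U mulr_sumr -sumrB; apply: eq_bigr => ? _; field; by rewrite nat1r.
  have e2 : q.+1%:R * V = \sum_(k < q.+1) 'C(q.+1, k)%:R * euler k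
      - \sum_(k < q.+1) (k == 0%N :> nat)%:R * euler k.
    rewrite /V mulr_sumr -sumrB; apply: eq_bigr => ? _; field; by rewrite nat1r.
  rewrite mulrBr (mulrCA _ (1 / 2)) e1 e2.
  rewrite hB hC' h0 big_mkord big_ord_recr /=.
  set A := \sum_(i < q.+1) euler i. set B := euler q.+1. by field.
apply: (@dy_coprime (U - 1 / 2 * V) q.+1 hodd).
apply: dyD.
  apply: dy_sum => k; apply: dyM; last exact: dy_euler.
  by apply: dy_int; apply: xk_int.
apply: dyN; apply: dyM; first exact: dy_half.
apply: dy_sum => k; apply: dyM; last exact: dy_euler.
by apply: dy_int; apply: yk_int.
Qed.
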